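(* In the directed variant of the greedy routing network creation game on any finite point set in any metric space, the Price of Anarchy equals $1$: every pure Nash equilibrium $\mathbf s$ satisfies $c(\mathbf s)=c(\mathbf s^* )$ where $\mathbf s^*$ is a social optimum.
   Context: Let $\mathcal P$ be a finite set of $n\ge2$ points (agents) in a metric space with metric $d$. In the directed variant each agent $u$ chooses a strategy $S_u\subseteq\{(u,v):v\in\mathcal P\setminus\{u\}\}$ of directed edges, which it owns. A profile $\mathbf s=(S_u)_u$ induces the directed network $G(\mathbf s)=(\mathcal P,\bigcup_u S_u)$. A greedy routing path from $u$ to $w$ is a directed path $(x_1=u,\dots,x_j=w)$ in $G(\mathbf s)$ with $d(x_i,w)>d(x_{i+1},w)$ for all $i$; $u$ is greedy connected if it has a greedy routing path to every other agent. The cost of $u$ is $c_u(\mathbf s)=|S_u|$ if $u$ is greedy connected and $\infty$ otherwise; the social cost is $c(\mathbf s)=\sum_u c_u(\mathbf s)$. A pure Nash equilibrium (NE) is a profile in which no agent can strictly decrease its cost by unilaterally changing its strategy; a social optimum minimizes social cost. The Price of Anarchy is the worst-case ratio $c(\mathbf s)/c(\mathbf s^* )$ over NE $\mathbf s$ and instances, where $\mathbf s^*$ is a social optimum. *)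

(* Defs.v *)
From mathcomp Require Import all_boot all_order all_algebra.
From mathcomp Require Import reals.
Set Implicit Arguments. Unset Strict Implicit. Unset Printing Implicit Defensive.
Import Order.TTheory GRing.Theory Num.Theory.
Local Open Scope ring_scope.

Section GreedyRouting.
Variables (T : finType) (R : realType) (d : T -> T -> R).

Definition is_metric : Prop :=
  [/\ forall x y, 0 <= d x y,
      forall x y, d x y = 0 <-> x = y,
      forall x y, d x y = d y x &
      forall x y z, d x z <= d x y + d y z].

(* A strategy profile: s u is the set of heads v of the edges (u,v) owned by u. *)
Definition profile := T -> {set T}.

Definition valid (s : profile) : Prop := forall u, u \notin s u.

Definition greedy_step (s : profile) (w : T) : rel T :=
  fun x y => (y \in s x) && (d y w < d x w).

Definition greedy_path (s : profile) (u w : T) : bool :=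
  connect (greedy_step s w) u w.

Definition greedy_connected (s : profile) (u : T) : bool :=
  [forall w, (w != u) ==> greedy_path s u w].

(* Costs in nat extended by infinity: None = infinity. *)
Definition cost (s : profile) (u : T) : option nat :=
  if greedy_connected s u then Some #|s u| else None.

Definition social_cost (s : profile) : option nat :=
  if [forall u, greedy_connected s u] then Some (\sum_u #|s u|)%N else None.

Definition lt_cost (a b : option nat) : bool :=
  match a, b with
  | Some x, Some y => (x < y)%N
  | Some _, None => true
  | None, _ => false
  end.

Definition le_cost (a b : option nat) : bool :=
  match a, b with
  | Some x, Some y => (x <= y)%N
  | _, None => true
  | None, Some _ => false
  end.

Definition deviate (s : profile) (u : T) (S : {set T}) : profile :=
  fun v => if v == u then S else s v.

Definition is_NE (s : profile) : Prop :=
  valid s /\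
  forall u (S : {set T}), u \notin S ->
    ~~ lt_cost (cost (deviate s u S) u) (cost s u).

Definition is_social_optimum (s : profile) : Prop :=
  valid s /\ forall s' : profile, valid s' -> le_cost (social_cost s) (social_cost s').

End GreedyRouting.

(* Main.v *)
Require Import Defs.
From mathcomp Require Import all_boot all_order all_algebra.
From mathcomp Require Import reals.
Set Implicit Arguments. Unset Strict Implicit. Unset Printing Implicit Defensive.
Import Order.TTheory GRing.Theory Num.Theory.
Local Open Scope ring_scope.

Section Aux.
Variables (T : finType) (R : realType) (d : T -> T -> R).

Lemma path_dev (s : profile T) u (S : {set T}) w y (p : seq T) :
  d y w < d u w -> path (greedy_step d s w) y p ->
  path (greedy_step d (deviate s u S) w) y p.
Proof.
elim: p y => [//|z p IH] y Hy /= /andP[/andP[Hz Hd] Hp].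
have Hyu : y != u by apply/eqP=> E; move: Hy; rewrite E ltxx.
apply/andP; split.
  by rewrite /greedy_step /deviate (negbTE Hyu) Hz Hd.
by apply: IH => //; apply: lt_trans Hd Hy.
Qed.

Lemma gp_dev (s : profile T) u (S : {set T}) w y :
  d y w < d u w -> greedy_path d s y w -> greedy_path d (deviate s u S) y w.
Proof.
move=> Hy /connectP[p Hp Hl]; apply/connectP; exists p => //.
exact: path_dev.
Qed.

Lemma conn_dev (s : profile T) u (S : {set T}) :
  (forall w, w != u -> exists2 y, y \in S & d y w < d u w /\ greedy_path d s y w) ->
  greedy_connected d (deviate s u S) u.
Proof.
move=> H; apply/forallP=> w; apply/implyP=> Hw.
have [y Hy [Hd Hp]] := H w Hw.
apply: (connect_trans (y := y)).
  by apply: connect1; rewrite /greedy_step /deviate eqxx Hy Hd.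
exact: gp_dev.
Qed.

Lemma first_step (s : profile T) u w :
  w != u -> greedy_path d s u w -> exists2 y, y \in s u & d y w < d u w.
Proof.
move=> Hw /connectP[[|y p] Hp Hl]; first by rewrite /= Hl eqxx in Hw.
by move: Hp => /= /andP[/andP[Hy Hd] _]; exists y.
Qed.

Lemma dpos x y : is_metric d -> x != y -> d y y < d x y.
Proof.
case=> H0 H1 _ _ Hxy.
have -> : d y y = 0 by apply/H1.
rewrite lt_def H0 andbT; apply/eqP=> E; move/H1: E => E.
by rewrite E eqxx in Hxy.
Qed.

Lemma NE_conn (s : profile T) : is_metric d -> is_NE d s ->
  forall u, greedy_connected d s u.
Proof.
move=> Hm [_ HN] u; case Hc: (greedy_connected d s u) => //.
have Hu : u \notin [set~ u] by rewrite !inE eqxx.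
move: (HN u _ Hu); rewrite /cost Hc.
have -> // : greedy_connected d (deviate s u [set~ u]) u.
apply: conn_dev => w Hw; exists w; first by rewrite !inE.
split; last exact: connect0.
by apply: dpos => //; rewrite eq_sym.
Qed.

Lemma NE_le (s s' : profile T) : is_metric d -> is_NE d s ->
  valid s' -> (forall u, greedy_connected d s' u) -> forall u, (#|s u| <= #|s' u|)%N.
Proof.
move=> Hm HNE Hv Hc' u.
have Hc := NE_conn Hm HNE.
have [_ HN] := HNE.
move: (HN u (s' u) (Hv u)).
rewrite /cost Hc.
have -> : greedy_connected d (deviate s u (s' u)) u.
  apply: conn_dev => w Hw.
  have := forallP (Hc' u) w; rewrite Hw /= => Hp.
  have [y Hy Hd] := first_step Hw Hp.
  exists y => //; split => //.
  case: (eqVneq y w) => [->|Hyw]; first exact: connect0.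
  by have := forallP (Hc y) w; rewrite eq_sym Hyw.
by rewrite /= /deviate eqxx -leqNgt.
Qed.
End Aux.

Theorem mainTheorem6 (T : finType) (R : realType) (d : T -> T -> R) :
  (2 <= #|T|)%N -> is_metric d ->
  forall s sopt : profile T,
    is_NE d s -> is_social_optimum d sopt ->
    social_cost d s = social_cost d sopt.
Proof.
move=> _ Hm s so HNE [Hvo Ho].
have Hc := NE_conn Hm HNE.
have Hs : social_cost d s = Some (\sum_u #|s u|)%N.
  by rewrite /social_cost; have -> : [forall u, greedy_connected d s u] by apply/forallP.
have := Ho s HNE.1; rewrite Hs /social_cost.
case: ifP => // /forallP Hco Hle.
congr Some; apply/eqP; rewrite eqn_leq andbC; apply/andP; split; first exact: Hle.
by apply: leq_sum => u _; apply: (NE_le Hm HNE Hvo Hco).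
Qed.
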